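(* Let $M$ be a graded generalized Eulerian $A_n(K)$-module. Then for every $i\ge0$ the Koszul homology $H_i(X_1,\dots,X_n;M)$ is concentrated in degree $0$.
   Context: $K$ is a field of characteristic zero, $R=K[X_1,\dots,X_n]$ standard graded, $A_n(K)$ the Weyl algebra graded by $\deg X_i=1$, $\deg\partial_i=-1$; $\mathcal E_n=\sum_iX_i\partial_i$; $|z|$ is the degree of homogeneous $z$. A graded left $A_n(K)$-module $M$ is generalized Eulerian if for every homogeneous $z\in M$ there is $a\ge1$ with $(\mathcal E_n-|z|)^az=0$. Koszul homology $H_i(X_1,\dots,X_n;M)$ is computed from the graded Koszul complex $K_p=\bigoplus_{i_1<\dots<i_p}M(-p)$ with degree-$0$ differentials, so $H_0=M/(X_1,\dots,X_n)M$; here $M(l)_j=M_{j+l}$. *)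

(* Defs.v *)
From HB Require Import structures.
From mathcomp Require Import all_boot all_order all_algebra.
Set Implicit Arguments. Unset Strict Implicit. Unset Printing Implicit Defensive.
Import Order.TTheory GRing.Theory Num.Theory.
Local Open Scope ring_scope.

Definition castM (K : fieldType) (M : int -> lmodType K) (a b : int) (e : a = b)
  (x : M a) : M b := eq_rect a (fun t => M t : Type) x b e.

Lemma deg_addK (j : int) : j + 1 - 1 = j. Proof. by rewrite addrK. Qed.
Lemma deg_subK (j : int) : j - 1 + 1 = j. Proof. by rewrite subrK. Qed.
Lemma deg_koszul (j : int) (p : nat) : j - (p.+1)%:Z + 1 = j - p%:Z.
Proof. by rewrite -addn1 PoszD opprD addrA subrK. Qed.

(* A graded left module over the Weyl algebra A_n(K), with deg X_i = 1 and
   deg d_i = -1, given by its homogeneous components M j (j : int) and the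
   action of the generators X_i, d_i, subject to the defining relations of
   A_n(K): [X_i, X_k] = 0, [d_i, d_k] = 0, [d_i, X_k] = delta_{ik}. *)
Record gradedWeylModule (K : fieldType) (n : nat) := GradedWeylModule {
  gM : int -> lmodType K;
  gX : 'I_n -> forall j : int, {linear gM j -> gM (j + 1)};
  gD : 'I_n -> forall j : int, {linear gM j -> gM (j - 1)};
  gXX : forall (i k : 'I_n) (j : int) (m : gM j),
      gX i (j + 1) (gX k j m) = gX k (j + 1) (gX i j m);
  gDD : forall (i k : 'I_n) (j : int) (m : gM j),
      gD i (j - 1) (gD k j m) = gD k (j - 1) (gD i j m);
  gDX : forall (i k : 'I_n) (j : int) (m : gM j),
      castM (deg_addK j) (gD i (j + 1) (gX k j m))
      - castM (deg_subK j) (gX k (j - 1) (gD i j m))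
      = (i == k)%:R *: m
}.

Section Defs.
Variables (K : fieldType) (n : nat) (M : gradedWeylModule K n).

Definition euler (j : int) (m : gM M j) : gM M j :=
  \sum_(i < n) castM (deg_subK j) (gX M i (j - 1) (gD M i j m)).

Definition generalized_eulerian : Prop :=
  forall (j : int) (z : gM M j), exists a : nat,
    (1 <= a)%N /\ iter a (fun w => euler w - j%:~R *: w) z = 0.

(* Degree-j part of the Koszul complex: K_p in degree j is
   \bigoplus_{S subset [n], |S| = p} M(-p)_j = \bigoplus_{|S|=p} M_{j-p};
   an element is a function S |-> c S (only values at |S| = p matter).
   Differential K_{p+1} -> K_p:
     e_S (x) m |-> sum_t (-1)^(t+1) e_{S \ s_t} (x) X_{s_t} m. *)
Definition koszul_d (p : nat) (j : int) (c : {set 'I_n} -> gM M (j - (p.+1)%:Z))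
  (S : {set 'I_n}) : gM M (j - p%:Z) :=
  \sum_(k < n | k \notin S)
     ((-1) ^+ #|[set l in S | (l < k)%N]|) *:
        castM (deg_koszul j p) (gX M k _ (c (k |: S))).

Definition koszul_cycle (i : nat) (j : int) :
  ({set 'I_n} -> gM M (j - i%:Z)) -> Prop :=
  match i return ({set 'I_n} -> gM M (j - i%:Z)) -> Prop with
  | 0 => fun _ => True
  | q.+1 => fun c => forall S : {set 'I_n}, #|S| = q -> koszul_d c S = 0
  end.

Definition koszul_boundary (i : nat) (j : int)
  (c : {set 'I_n} -> gM M (j - i%:Z)) : Prop :=
  exists b : {set 'I_n} -> gM M (j - (i.+1)%:Z),
    forall S : {set 'I_n}, #|S| = i -> koszul_d b S = c S.

Definition koszul_homology_vanishes (i : nat) (j : int) : Prop :=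
  forall c : {set 'I_n} -> gM M (j - i%:Z),
    koszul_cycle c -> koszul_boundary c.

End Defs.

(* Main.v *)
Require Import Defs.
From HB Require Import structures.
From mathcomp Require Import all_boot all_order all_algebra ring.
Import Order.TTheory GRing.Theory Num.Theory.
Local Open Scope ring_scope.
Set Implicit Arguments. Unset Strict Implicit.

Section Cast.
Variables (K : fieldType) (F : int -> lmodType K).

Lemma castM_id (a : int) (e : a = a) (x : F a) : castM e x = x.
Proof. by rewrite (eq_irrelevance e (erefl a)). Qed.

Lemma castM_eq (a b : int) (e1 e2 : a = b) (x : F a) : castM e1 x = castM e2 x.
Proof. by rewrite (eq_irrelevance e1 e2). Qed.

Lemma castMM (a b c : int) (e1 : a = b) (e2 : b = c) (x : F a) :
  castM e2 (castM e1 x) = castM (etrans e1 e2) x.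
Proof. by case: c / e2; case: b / e1. Qed.

Lemma castMD (a b : int) (e : a = b) (x y : F a) :
  castM e (x + y) = castM e x + castM e y.
Proof. by case: b / e. Qed.

Lemma castMB (a b : int) (e : a = b) (x y : F a) :
  castM e (x - y) = castM e x - castM e y.
Proof. by case: b / e. Qed.

Lemma castMZ (a b : int) (e : a = b) r (x : F a) :
  castM e (r *: x) = r *: castM e x.
Proof. by case: b / e. Qed.

Lemma castM0 (a b : int) (e : a = b) : castM e (0 : F a) = 0.
Proof. by case: b / e. Qed.

Lemma castM_sum (a b : int) (e : a = b) (I : finType) (P : pred I) (G : I -> F a) :
  castM e (\sum_(i | P i) G i) = \sum_(i | P i) castM e (G i).
Proof. by case: b / e. Qed.

End Cast.

Section Weyl.
Variables (K : fieldType) (n : nat) (M : gradedWeylModule K n).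
Notation MM := (gM M).
Notation X := (gX M).
Notation D := (gD M).

Lemma castMX k (a b : int) (e : a = b) (x : MM a) :
  X k b (castM e x) = castM (f_equal (fun t => t + 1) e) (X k a x).
Proof. by case: b / e. Qed.

Lemma castMDD k (a b : int) (e : a = b) (x : MM a) :
  D k b (castM e x) = castM (f_equal (fun t => t - 1) e) (D k a x).
Proof. by case: b / e. Qed.

Lemma castM_euler (a b : int) (e : a = b) (x : MM a) :
  euler (castM e x) = castM e (euler x).
Proof. by case: b / e. Qed.

Lemma eulerD t (x y : MM t) : euler (x + y) = euler x + euler y.
Proof.
rewrite /euler -big_split /=; apply: eq_bigr => i _.
by rewrite !raddfD /= castMD.
Qed.

Lemma eulerZ t r (x : MM t) : euler (r *: x) = r *: euler x.
Proof.
rewrite /euler scaler_sumr; apply: eq_bigr => i _.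
by rewrite !linearZ /= castMZ.
Qed.

Lemma euler0 t : euler (0 : MM t) = 0.
Proof. by rewrite -[X in euler X](scale0r (0 : MM t)) eulerZ scale0r. Qed.

Lemma eulerB t (x y : MM t) : euler (x - y) = euler x - euler y.
Proof. by rewrite eulerD -scaleN1r eulerZ scaleN1r. Qed.

Lemma euler_sum t (I : finType) (P : pred I) (G : I -> MM t) :
  euler (\sum_(i | P i) G i) = \sum_(i | P i) euler (G i).
Proof. exact: (big_morph _ (@eulerD t) (@euler0 t)). Qed.

Lemma XD_comm t k l (w : MM t) : k != l ->
  castM (deg_subK t) (X k (t - 1) (D l t w)) =
  castM (deg_addK t) (D l (t + 1) (X k t w)).
Proof.
move=> kl; have := gDX l k w; rewrite eq_sym in kl; rewrite (negbTE kl) scale0r.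
by move/eqP; rewrite subr_eq0 => /eqP ->.
Qed.

Lemma DX_diag t k (w : MM t) :
  castM (deg_addK t) (D k (t + 1) (X k t w)) =
  castM (deg_subK t) (X k (t - 1) (D k t w)) + w.
Proof.
have := gDX k k w; rewrite eqxx scale1r => /eqP; rewrite subr_eq => /eqP ->.
by rewrite addrC.
Qed.

Lemma euler_X t k (m : MM t) :
  euler (X k t m) = X k t (euler m) + X k t m.
Proof.
have E1 : forall i, D i (t + 1) (X k t m) =
  castM (esym (deg_addK t)) ((i == k)%:R *: m + castM (deg_subK t) (X k (t - 1) (D i t m))).
  move=> i; have := gDX i k m; move/eqP; rewrite subr_eq => /eqP H.
  by rewrite -H castMM castM_id.
rewrite /euler raddf_sum /=.
have -> : \sum_(i < n) castM (deg_subK (t + 1)) (X i (t + 1 - 1) (D i (t + 1) (X k t m)))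
  = \sum_(i < n) (X k t (castM (deg_subK t) (X i (t - 1) (D i t m))) + (i == k)%:R *: X i t m).
  apply: eq_bigr => i _; rewrite E1 castMX castMM castM_id raddfD /=.
  rewrite linearZ /= [RHS]addrC; congr (_ + _).
  by rewrite !castMX gXX; apply: castM_eq.
rewrite big_split /=; congr (_ + _).
rewrite (bigD1 k) //= eqxx scale1r big1 ?addr0 // => i /negbTE ->; by rewrite scale0r.
Qed.
End Weyl.

Lemma zhelp (V : zmodType) (A B C Q : V) : A - Q = B + A + C - (B + C + Q).
Proof. by rewrite [B + A]addrC -[A + B + C]addrA opprD [RHS]addrA addrK. Qed.

Section Combi.
Variables (K : fieldType) (n : nat).

Definition sgn (T : {set 'I_n}) (k : 'I_n) : K := (-1) ^+ #|[set l in T | (l < k)%N]|.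

Lemma sgn_sq T k : sgn T k * sgn T k = 1.
Proof. by rewrite /sgn -exprD addnn -mul2n exprM sqrrN !expr1n. Qed.

Lemma card_ltU1 (a k : 'I_n) (T : {set 'I_n}) : a \notin T ->
  #|[set x in a |: T | (x < k)%N]| = ((a < k)%N + #|[set x in T | (x < k)%N]|)%N.
Proof.
move=> aT; case H: (a < k)%N.
  have -> : [set x in a |: T | (x < k)%N] = a |: [set x in T | (x < k)%N].
    apply/setP => x; rewrite !inE; case: (eqVneq x a) => [->|] //=.
  by rewrite cardsU1 inE (negbTE aT).
rewrite add0n; apply: eq_card => x; rewrite !inE.
by case: (eqVneq x a) => [->|] //=; rewrite H (negbTE aT).
Qed.

Lemma sgnU1 (a k : 'I_n) (T : {set 'I_n}) : a \notin T -> sgn (a |: T) k = (-1) ^+ (a < k)%N * sgn T k.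
Proof. by move=> aT; rewrite /sgn card_ltU1 // exprD. Qed.

Lemma sgn_swap (k l : 'I_n) (T : {set 'I_n}) : k \notin T -> l \notin T -> k != l ->
  sgn (l |: T) k * sgn (k |: T) l = - (sgn T l * sgn T k).
Proof.
move=> kT lT kl; rewrite !sgnU1 //.
have : (-1) ^+ (l < k)%N * (-1) ^+ (k < l)%N = - 1 :> K.
  case: (ltngtP l k) => H; rewrite ?expr0 ?expr1 ?mulr1 ?mul1r //.
  by move: kl; rewrite (_ : k = l) ?eqxx //; apply: val_inj.
move=> E; transitivity ((-1) ^+ (l < k)%N * (-1) ^+ (k < l)%N * (sgn T l * sgn T k)).
  ring.
by rewrite E mulN1r.
Qed.

Lemma combi (V : lmodType K) (z : {set 'I_n} -> V) (XD DX : 'I_n -> 'I_n -> V -> V)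
  (Hc : forall k l v, k != l -> XD k l v = DX l k v)
  (Hd : forall k v, DX k k v = XD k k v + v) (S : {set 'I_n}) :
  \sum_(k < n | k \notin S) sgn S k *: \sum_(l in k |: S)
      sgn ((k |: S) :\ l) l *: XD k l (z ((k |: S) :\ l))
  = \sum_(k < n) XD k k (z S) + #|S|%:R *: z S
    - \sum_(l in S) sgn (S :\ l) l *: \sum_(k < n | k \notin S :\ l)
        sgn (S :\ l) k *: DX l k (z (k |: (S :\ l))).
Proof.
have L1 : forall k, k \notin S -> sgn S k *: \sum_(l in k |: S)
      sgn ((k |: S) :\ l) l *: XD k l (z ((k |: S) :\ l)) =
   XD k k (z S) + \sum_(l in S) sgn S k *: (sgn ((k |: S) :\ l) l *: XD k l (z ((k |: S) :\ l))).
  move=> k kS; rewrite (bigD1 k) ?setU11 //= setU1K // scalerDr scalerA sgn_sq scale1r.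
  rewrite scaler_sumr; congr (_ + _); apply: eq_bigl => l; rewrite !inE.
  by case: (eqVneq l k) => [->|] /=; [rewrite (negbTE kS)|rewrite andbT].
have L2 : forall l, l \in S -> sgn (S :\ l) l *: \sum_(k < n | k \notin S :\ l)
        sgn (S :\ l) k *: DX l k (z (k |: (S :\ l))) =
   (XD l l (z S) + z S) + \sum_(k < n | k \notin S) sgn (S :\ l) l *: (sgn (S :\ l) k *: DX l k (z (k |: (S :\ l)))).
  move=> l lS; rewrite (bigD1 l) ?setD11 //= setD1K // scalerDr scalerA sgn_sq scale1r Hd.
  rewrite scaler_sumr; congr (_ + _); apply: eq_bigl => k; rewrite !inE.
  by case: (eqVneq k l) => [->|] /=; [rewrite lS|rewrite andbT].
rewrite (eq_bigr _ L1) (eq_bigr _ L2) !big_split /= (bigID (mem S) predT) /= sumr_const.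
rewrite (exchange_big _ _ _ (mem S)) /=.
have -> : \sum_(k < n | k \notin S) \sum_(l in S)
     sgn S k *: (sgn ((k |: S) :\ l) l *: XD k l (z ((k |: S) :\ l))) =
   - \sum_(k < n | k \notin S) \sum_(l in S)
     sgn (S :\ l) l *: (sgn (S :\ l) k *: DX l k (z (k |: (S :\ l)))).
  rewrite -sumrN; apply: eq_bigr => k kS; rewrite -sumrN; apply: eq_bigr => l lS.
  have kl : k != l by apply: contraNneq kS => ->.
  have E : (k |: S) :\ l = k |: (S :\ l).
    apply/setP => x; rewrite !inE; case: (eqVneq x l) => [->|] //=.
    by rewrite eq_sym (negbTE kl).
  rewrite E Hc // !scalerA -scaleNr; congr (_ *: _).
  rewrite -{1}(setD1K lS) sgn_swap ?setD11 //.
  by rewrite !inE negb_and negbK kS orbT.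
by rewrite scaler_nat; apply: zhelp.
Qed.
End Combi.

Section Koszul.
Variables (K : fieldType) (n : nat) (M : gradedWeylModule K n).
Notation MM := (gM M).
Notation X := (gX M).
Notation D := (gD M).

Lemma eH (j : int) (i : nat) : j - i%:Z - 1 = j - (i.+1)%:Z.
Proof. by rewrite -addn1 PoszD opprD addrA. Qed.

Definition hz (i : nat) (j : int) (z : {set 'I_n} -> MM (j - i%:Z)) (S : {set 'I_n}) :
  MM (j - (i.+1)%:Z) :=
  \sum_(l in S) sgn K (S :\ l) l *: castM (eH j i) (D l (j - i%:Z) (z (S :\ l))).

Definition Rterm (i : nat) (j : int) (z : {set 'I_n} -> MM (j - i%:Z)) (S : {set 'I_n}) :
  MM (j - i%:Z) :=
  \sum_(l in S) sgn K (S :\ l) l *: castM (deg_addK (j - i%:Z))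
     (D l (j - i%:Z + 1) (\sum_(k < n | k \notin S :\ l)
         sgn K (S :\ l) k *: X k (j - i%:Z) (z (k |: (S :\ l))))).

Lemma homotopy (i : nat) (j : int) (z : {set 'I_n} -> MM (j - i%:Z)) (S : {set 'I_n}) :
  koszul_d (hz z) S = euler (z S) + #|S|%:R *: z S - Rterm z S.
Proof.
pose t := j - i%:Z.
pose XD k l (w : MM t) := castM (deg_subK t) (X k (t - 1) (D l t w)).
pose DX l k (w : MM t) := castM (deg_addK t) (D l (t + 1) (X k t w)).
have Hc : forall k l v, k != l -> XD k l v = DX l k v by move=> k l v; apply: XD_comm.
have Hd : forall k v, DX k k v = XD k k v + v by move=> k v; apply: DX_diag.
transitivity (\sum_(k < n | k \notin S) sgn K S k *: \sum_(l in k |: S)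
      sgn K ((k |: S) :\ l) l *: XD k l (z ((k |: S) :\ l))).
  apply: eq_bigr => k _; congr (_ *: _); rewrite /hz raddf_sum castM_sum.
  apply: eq_bigr => l _.
  rewrite /= linearZ castMZ /= castMX castMM; congr (_ *: _).
  exact: castM_eq.
rewrite (combi z Hc Hd S); congr (_ + _ - _).
rewrite /Rterm; apply: eq_bigr => l _; congr (_ *: _).
rewrite raddf_sum castM_sum; apply: eq_bigr => k _; by rewrite /= linearZ castMZ.
Qed.
End Koszul.

Lemma intz_add1 (K : fieldType) (m : int) : (m + 1)%:~R = m%:~R + 1 :> K.
Proof. by rewrite intrD. Qed.

Section Main.
Variables (K : fieldType) (n : nat) (M : gradedWeylModule K n).
Notation MM := (gM M).
Notation X := (gX M).
Notation D := (gD M).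

Definition Nop (t : int) (w : MM t) : MM t := euler w - t%:~R *: w.

Lemma Nop0 t : Nop (0 : MM t) = 0.
Proof. by rewrite /Nop euler0 scaler0 subr0. Qed.

Lemma iter_Nop0 t a : iter a (@Nop t) 0 = 0.
Proof. by elim: a => //= a ->; rewrite Nop0. Qed.

Lemma dN (i : nat) (j : int) (c : {set 'I_n} -> MM (j - (i.+1)%:Z)) S :
  koszul_d (fun T => Nop (c T)) S = Nop (koszul_d c S).
Proof.
rewrite /koszul_d /Nop euler_sum scaler_sumr -sumrB; apply: eq_bigr => k _.
set w := c (k |: S).
have -> : X k _ (euler w - (j - (i.+1)%:Z)%:~R *: w) =
   euler (X k _ w) - X k _ w - (j - (i.+1)%:Z)%:~R *: X k _ w.
  by rewrite raddfB /= linearZ /= euler_X addrK.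
rewrite !castMB eulerZ castM_euler castMZ scalerA mulrC -scalerA -scalerBr.
congr (_ *: _).
rewrite -addrA -opprD -[X in _ - (X + _)](scale1r) -scalerDl.
congr (_ - (_ *: _)).
have E : j - i%:Z = (j - (i.+1)%:Z) + 1 by rewrite -(eH j i) subrK.
by rewrite E intz_add1 addrC.
Qed.

Lemma cycleN (i : nat) (j : int) (z : {set 'I_n} -> MM (j - i%:Z)) :
  koszul_cycle z -> koszul_cycle (fun S => Nop (z S)).
Proof.
case: i z => [|q] z //= Hz S HS.
by rewrite dN Hz // Nop0.
Qed.

Lemma kd_lin (i : nat) (j : int) (f g : {set 'I_n} -> MM (j - (i.+1)%:Z)) a b S :
  koszul_d (fun T => a *: f T + b *: g T) S = a *: koszul_d f S + b *: koszul_d g S.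
Proof.
rewrite /koszul_d !scaler_sumr -big_split /=; apply: eq_bigr => k _.
by rewrite raddfD /= !linearZ /= castMD !castMZ scalerDr !scalerA.
Qed.

Lemma kd0 (i : nat) (j : int) S :
  koszul_d (fun _ => (0 : MM (j - (i.+1)%:Z))) S = 0.
Proof. by rewrite /koszul_d big1 // => k _; rewrite raddf0 castM0 scaler0. Qed.

Lemma Rterm0 (i : nat) (j : int) (z : {set 'I_n} -> MM (j - i%:Z)) (S : {set 'I_n}) :
  koszul_cycle z -> #|S| = i -> Rterm z S = 0.
Proof.
case: i z => [|q] z /= Hz HS.
  by rewrite (cards0_eq HS) /Rterm big_set0.
rewrite /Rterm big1 // => l lS.
have -> : \sum_(k < n | k \notin S :\ l) sgn K (S :\ l) k *: X k (j - (q.+1)%:Z) (z (k |: S :\ l))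
   = castM (esym (deg_koszul j q)) (koszul_d z (S :\ l)).
  rewrite /koszul_d castM_sum; apply: eq_bigr => k _.
  by rewrite castMZ castMM castM_id.
rewrite Hz ?castM0 ?raddf0 ?castM0 ?scaler0 //.
by move: HS; rewrite (cardsD1 l) lS => -[].
Qed.

End Main.

Lemma zh2 (K : fieldType) (V : lmodType K) (e u : V) (r s : K) :
  e + r *: u - (e - s *: u) = (r + s) *: u.
Proof. by rewrite opprB addrC addrA subrK scalerDl addrC. Qed.

Lemma intr_neq0 (K : fieldType) (hK : [pchar K] =i pred0) (j : int) :
  j != 0 -> (j%:~R : K) != 0.
Proof.
have H := (pcharf0P K).1 hK.
case: j => m Hm.
  by rewrite /= H; apply: contra Hm => /eqP ->.
by rewrite NegzE mulrNz oppr_eq0 /= H.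
Qed.

Unset Implicit Arguments.
Set Strict Implicit.

Theorem theorem5p1 (K : fieldType) (hK : [pchar K] =i pred0) (n : nat)
  (M : gradedWeylModule K n) :
  generalized_eulerian M ->
  forall (i : nat) (j : int), j != 0 -> koszul_homology_vanishes M i j.
Proof.
move=> Heul i j Hj c Hc.
pose t := j - i%:Z.
have Hj' := intr_neq0 hK Hj.
have [a Ha] : exists a, forall S, iter a (@Nop _ _ M t) (c S) = 0.
  have H : forall s : seq {set 'I_n}, exists a, forall S, S \in s -> iter a (@Nop _ _ M t) (c S) = 0.
    elim=> [|S0 s [a Ha]]; first by exists 0%N.
    have [b [_ Hb]] := Heul t (c S0).
    have Hb' : iter b (@Nop _ _ M t) (c S0) = 0 := Hb.
    exists (a + b)%N => S; rewrite inE => /orP [/eqP ->|/Ha HS].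
      by rewrite iterD Hb' iter_Nop0.
    by rewrite addnC iterD HS iter_Nop0.
  have [a Ha] := H (enum {set 'I_n}).
  by exists a => S; apply: Ha; rewrite mem_enum.
move: a c Hc Ha; elim=> [|a IH] z Hz Hn.
  by exists (fun _ => 0) => S _; rewrite kd0; symmetry; exact: (Hn S).
have [b' Hb'] := IH (fun S => Nop (z S)) (cycleN Hz) (fun S => etrans (esym (iterSr _ _ _)) (Hn S)).
exists (fun T => (j%:~R)^-1 *: hz z T + (- (j%:~R)^-1) *: b' T) => S HS.
rewrite kd_lin homotopy (Rterm0 Hz HS) subr0 Hb' // HS /Nop.
rewrite scaleNr -scalerBr zh2.
have -> : (i%:R + t%:~R : K) = j%:~R.
  by rewrite /t intrB addrC subrK.
by rewrite scalerA mulVf // scale1r.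
Qed.
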